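(* Let $A(x)=\sum_{i=0}^d a_ix^i\in\mathbb{Z}[x]$ be primitive of degree $d\ge1$ with $a_0\ne0$, and let $m>d$. Then $\Lambda_m$ is a submodule of $\Theta_m$ of index $|a_d|^{m-d}$.
   Context: A vector $(x_1,\dots,x_m)$ is a linear recurrence determined by $A$ if $\sum_{i=0}^d a_ix_{j+i}=0$ for all $1\le j\le m-d$. $\Lambda_m\subseteq\mathbb{Z}^m$ is the $\mathbb{Z}$-module of vectors in $\mathbb{Z}^m$ that are linear recurrences determined by $A$; $\Theta_m\subseteq\mathbb{Z}^d\times\mathbb{Q}^{m-d}$ is the $\mathbb{Z}$-module of vectors in $\mathbb{Q}^m$ that are linear recurrences determined by $A$ and whose first $d$ coordinates are integers. *)

(* Defs.v *)
From HB Require Import structures.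
From mathcomp Require Import all_boot all_order all_algebra.
Set Implicit Arguments. Unset Strict Implicit. Unset Printing Implicit Defensive.
Import Order.TTheory GRing.Theory Num.Theory.
Local Open Scope ring_scope.

(* An integer polynomial is primitive if the gcd of its coefficients is 1.
   [zcontents A] is that gcd up to the sign of the leading coefficient. *)
Definition primitive_poly (A : {poly int}) : Prop := `|zcontents A| = 1.

(* k-th coordinate (0-based) of a vector in Q^m; 0 out of range. *)
Definition vc (m : nat) (x : 'rV[rat]_m) (k : nat) : rat :=
  if insub k is Some i then x 0 i else 0.

Definition is_lin_rec (A : {poly int}) (m : nat) (x : 'rV[rat]_m) : Prop :=
  forall j : nat, (j + (size A).-1 < m)%N ->
    \sum_(i < (size A).-1.+1) (A`_i)%:~R * vc x (j + i) = 0.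

Definition Lambda (A : {poly int}) (m : nat) (x : 'rV[rat]_m) : Prop :=
  (forall k : 'I_m, x 0 k \is a Num.int) /\ is_lin_rec A x.

Definition Theta (A : {poly int}) (m : nat) (x : 'rV[rat]_m) : Prop :=
  (forall k : 'I_m, (k < (size A).-1)%N -> x 0 k \is a Num.int) /\ is_lin_rec A x.

Definition has_index (V : zmodType) (H G : V -> Prop) (N : nat) : Prop :=
  exists r : 'I_N -> V,
    (forall i, G (r i)) /\
    (forall x, G x -> exists i, H (x - r i)) /\
    (forall i j, H (r i - r j) -> i = j).

(* Main.v *)
Require Import Defs.
From HB Require Import structures.
From mathcomp Require Import all_boot all_order all_algebra.
Set Implicit Arguments. Unset Strict Implicit. Unset Printing Implicit Defensive.
Import Order.TTheory GRing.Theory Num.Theory.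
Local Open Scope ring_scope.

Section Generic.
Variable V : zmodType.

Definition subgrp (P : V -> Prop) := P 0 /\ forall u v, P u -> P v -> P (u - v).

Lemma subgrpN P u : subgrp P -> P u -> P (- u).
Proof. by case=> P0 PB Pu; rewrite -sub0r; apply: PB. Qed.

Lemma subgrpD P u v : subgrp P -> P u -> P v -> P (u + v).
Proof. by move=> sP Pu Pv; rewrite -[v]opprK; apply: sP.2 => //; apply: subgrpN. Qed.

Lemma subgrpMn P u j : subgrp P -> P u -> P (u *+ j).
Proof.
move=> sP Pu; elim: j => [|j IH]; first by rewrite mulr0n; case: sP.
by rewrite mulrS; apply: subgrpD.
Qed.

Lemma subgrpMNn P u j : subgrp P -> P u -> P (u *- j).
Proof. by move=> sP Pu; apply: subgrpN => //; apply: subgrpMn. Qed.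

Lemma has_index_ext (H G H' G' : V -> Prop) N :
  (forall x, H x <-> H' x) -> (forall x, G x <-> G' x) ->
  has_index H G N -> has_index H' G' N.
Proof.
move=> eH eG [r [rG [cov dis]]]; exists r; split; first by move=> i; apply/eG.
split; first by move=> x /eG /cov [i /eH Hi]; exists i.
by move=> i j /eH; apply: dis.
Qed.

Lemma has_index_comp (H K G : V -> Prop) N1 N2 :
  subgrp H -> subgrp K -> subgrp G ->
  (forall x, H x -> K x) -> (forall x, K x -> G x) ->
  has_index K G N1 -> has_index H K N2 -> has_index H G (N1 * N2).
Proof.
move=> sH sK sG HK KG [r [rG [rcov rdis]]] [s [sK' [scov sdis]]].
have E : (N1 * N2 = #|{: 'I_N1 * 'I_N2}|)%N by rewrite card_prod !card_ord.
pose e (p : 'I_(N1 * N2)) : 'I_N1 * 'I_N2 := enum_val (cast_ord E p).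
exists (fun p => r (e p).1 + s (e p).2); split.
  by move=> p; apply: subgrpD => //; apply: KG.
split.
  move=> x /rcov [i Ki]; have [j Hj] := scov _ Ki.
  exists (cast_ord (esym E) (enum_rank (i, j))).
  by rewrite /e cast_ordKV enum_rankK /= opprD addrA.
move=> p q Hpq.
have Kd : K (r (e p).1 - r (e q).1).
  have : K (r (e p).1 + s (e p).2 - (r (e q).1 + s (e q).2)) by apply: HK.
  move=> Kx; have Ks : K (s (e p).2 - s (e q).2) by apply: sK.2; apply: sK'.
  have := sK.2 _ _ Kx Ks.
  suff -> : r (e p).1 + s (e p).2 - (r (e q).1 + s (e q).2) - (s (e p).2 - s (e q).2)
     = r (e p).1 - r (e q).1 by [].
  by rewrite opprD addrACA addrK.
have e1 := rdis _ _ Kd.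
have e2 : (e p).2 = (e q).2.
  apply: sdis; move: Hpq; rewrite e1.
  by rewrite opprD addrACA subrr add0r.
have : e p = e q by case: (e p) (e q) e1 e2 => [? ?] [? ?] /= -> ->.
by move/enum_val_inj/cast_ord_inj.
Qed.
End Generic.

Lemma sum_shift (R : pzRingType) (c z : nat -> R) (S M j : nat) :
  (forall i, (S <= i)%N -> c i = 0) -> (j + S <= M)%N ->
  \sum_(k < M) (if (j <= k)%N then c (k - j)%N else 0) * z k =
  \sum_(i < S) c i * z (j + i)%N.
Proof.
move=> c0 hM.
have hjM : (j <= M)%N by apply: leq_trans hM; apply: leq_addr.
rewrite -(big_mkord xpredT (fun k => (if (j <= k)%N then c (k - j)%N else 0) * z k)).
rewrite (big_cat_nat (n:=j)) //=.
rewrite [X in X + _](_ : _ = 0) ?add0r; last first.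
  rewrite big_nat_cond big1 // => k /andP[/andP[_ hk] _].
  by rewrite leqNgt hk mul0r.
rewrite -{1}[j]add0n big_addn.
have hS : (S <= M - j)%N by rewrite leq_subRL.
rewrite (big_cat_nat (n:=S)) //=.
rewrite [X in _ + X](_ : _ = 0) ?addr0; last first.
  rewrite big_nat_cond big1 // => i /andP[/andP[hi _] _].
  by rewrite leq_addl addnK c0 ?mul0r.
rewrite big_mkord; apply: eq_bigr => i _.
by rewrite leq_addl addnK addnC.
Qed.

Lemma core (A : {poly int}) (N : nat) : `|zcontents A| = 1 ->
  exists z : nat -> int, forall j, (j <= N)%N ->
    \sum_(i < size A) A`_i * z (j + i)%N = (j == N)%:R.
Proof.
move=> hA.
pose S := size A; pose M := (N.+1 + S.-1)%N.
have hSM : forall j, (j <= N)%N -> (j + S <= M)%N.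
  move=> j hj; rewrite /M /S; case: (size A) => [|s] /=.
    by rewrite !addn0 (leq_trans hj).
  by rewrite addnS addSn ltnS leq_add2r.
pose T : 'M[int]_(N.+1, M) :=
  \matrix_(j, k) (if (j <= k)%N then A`_(k - j) else 0).
have [Lm uL [R uR [dl _ eT]]] := int_Smith_normal_form T.
pose D : 'M[int]_(N.+1, M) := \matrix_(i, j) (dl`_i *+ (i == j :> nat)).
have eT' : T = Lm *m D *m R by [].
have c0 : forall i, (S <= i)%N -> A`_i = 0 by move=> i hi; rewrite nth_default.
have hd : forall i : 'I_N.+1, dl`_i * dl`_i = 1.
  move=> i.
  pose v := delta_mx 0 i *m invmx Lm : 'rV[int]_N.+1.
  have vL : v *m Lm = delta_mx 0 i by rewrite -mulmxA mulVmx // mulmx1.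
  have dvT : forall k : 'I_M, (dl`_i %| (v *m T) ord0 k)%Z.
    move=> k; rewrite eT' !mulmxA vL -rowE !mxE.
    apply: rpred_sum => l _; rewrite !mxE mulrnAl; apply: rpredMn.
    exact: dvdz_mulr.
  pose V := \poly_(j < N.+1) v 0 (inord j).
  have dvV : forall k, (dl`_i %| (V * A)`_k)%Z.
    move=> k; rewrite coefM.
    have -> : \sum_(j < k.+1) V`_j * A`_(k - j) =
              \sum_(j < N.+1) v 0 j * (if (j <= k)%N then A`_(k - j) else 0).
      have eV : forall j : 'I_N.+1, v 0 j = V`_j.
        by move=> j; rewrite coef_poly ltn_ord inord_val.
      rewrite [RHS](eq_bigr (fun j : 'I_N.+1 => V`_j * (if (j <= k)%N then A`_(k - j) else 0))); last first.
        by move=> j _; rewrite eV.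
      rewrite (big_ord_widen (k+N).+1 (fun j => V`_j * A`_(k - j))) ?ltnS ?leq_addr //.
      rewrite [RHS](big_ord_widen (k+N).+1 (fun j => V`_j * (if (j <= k)%N then A`_(k - j) else 0))) ?ltnS ?leq_addl //.
      rewrite big_mkcond [RHS]big_mkcond /=; apply: eq_bigr => j _.
      rewrite !coef_poly ltnS.
      by case: (j <= k)%N; case: (j < N.+1)%N; rewrite /= ?mul0r ?mulr0.
    case: (ltnP k M) => hk.
      have := dvT (Ordinal hk); rewrite !mxE.
      by congr (_ %| _)%Z; apply: eq_bigr => j _; rewrite !mxE.
    rewrite big1 ?dvdz0 // => j _; case: ifP => hj; last by rewrite mulr0.
    rewrite c0 ?mulr0 //.
    by rewrite leq_subRL // (leq_trans (hSM j (ltn_ord j)) hk).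
  have dvc : (dl`_i %| zcontents V)%Z.
    have : (dl`_i %| zcontents (V * A))%Z by rewrite dvdz_contents; apply/polyOverP.
    rewrite zcontentsM => h.
    have cc : zcontents A * zcontents A = 1.
      by rewrite -expr2 -real_normK ?num_real // hA expr1n.
    by rewrite -[zcontents V]mulr1 -cc mulrA; apply: dvdz_mulr.
  move: dvc; rewrite dvdz_contents => /polyOverP dvV'.
  have : (dl`_i %| (v *m Lm) ord0 i)%Z.
    rewrite !mxE; apply: rpred_sum => j _; apply: dvdz_mulr.
    by have := dvV' j; rewrite coef_poly ltn_ord inord_val.
  rewrite vL mxE !eqxx /= dvdz1 => /eqP h1.
  by rewrite -expr2 -real_normK ?num_real // -abszE h1.
pose u := invmx Lm *m delta_mx (@ord_max N) (0 : 'I_1).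
pose w : 'cV[int]_M := col_mx (\col_j (dl`_j * u j 0)) 0.
pose zc := invmx R *m w.
have DW : D *m w = u.
  apply/matrixP => j k; rewrite !ord1 !mxE big_split_ord /=.
  rewrite [X in _ + X]big1 ?addr0.
    rewrite (bigD1 j) //= big1 ?addr0.
      by rewrite !mxE (unsplitK (inl _)) !mxE /= eqxx mulr1n mulrA hd mul1r.
    move=> l hl; have /negbTE hn : (val l != val j) := hl.
    by rewrite !mxE eq_sym hn mulr0n mul0r.
  move=> l _; rewrite !mxE /=.
  by rewrite eqn_leq [(N.+1 + l <= j)%N]leqNgt (leq_trans (ltn_ord j) (leq_addr _ _)) andbF mulr0n mul0r.
have TZ : T *m zc = delta_mx (@ord_max N) (0 : 'I_1).
  by rewrite eT' -!mulmxA (mulmxA R) mulmxV // mul1mx DW mulmxA mulmxV // mul1mx.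
exists (fun k => if (k < M)%N then zc (inord k) 0 else 0).
move=> j hj.
have := congr1 (fun X : 'cV[int]_N.+1 => X (inord j) 0) TZ; rewrite !mxE.
have e1 : (inord j == ord_max :> 'I_N.+1) = (j == N).
  by rewrite -val_eqE /= inordK.
rewrite e1 eqxx andbT => <-.
rewrite -(@sum_shift _ (fun i => A`_i) (fun k => if (k < M)%N then zc (inord k) 0 else 0) S M j c0 (hSM _ hj)).
have zk : forall k : 'I_M, (if (k < M)%N then zc (inord k) 0 else 0) = zc k 0.
  by move=> k; rewrite ltn_ord inord_val.
apply: eq_bigr => k _; rewrite zk; congr (_ * _).
by rewrite /T mxE inordK.
Qed.

Section VC.
Variable m : nat.
Implicit Types x y : 'rV[rat]_m.

Lemma vcB x y k : vc (x - y) k = vc x k - vc y k.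
Proof. by rewrite /vc; case: insub => [i|]; rewrite ?mxE ?subr0. Qed.
Lemma vcD x y k : vc (x + y) k = vc x k + vc y k.
Proof. by rewrite /vc; case: insub => [i|]; rewrite ?mxE ?addr0. Qed.
Lemma vcN x k : vc (- x) k = - vc x k.
Proof. by rewrite /vc; case: insub => [i|]; rewrite ?mxE ?oppr0. Qed.
Lemma vc0 k : vc (0 : 'rV[rat]_m) k = 0.
Proof. by rewrite /vc; case: insub => [i|]; rewrite ?mxE. Qed.
Lemma vcZ c x k : vc (c *: x) k = c * vc x k.
Proof. by rewrite /vc; case: insub => [i|]; rewrite ?mxE ?mulr0. Qed.
Lemma vcMn x j k : vc (x *+ j) k = vc x k *+ j.
Proof.
elim: j => [|j IH]; first by rewrite !mulr0n vc0.
by rewrite !mulrS vcD IH.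
Qed.
Lemma vc_row (f : nat -> rat) k :
  vc (\row_(i < m) f i) k = if (k < m)%N then f k else 0.
Proof.
rewrite /vc; case: insubP => [i hk <-|]; first by rewrite mxE ltn_ord.
by move/negbTE => ->.
Qed.
Lemma vc_int x k : (m <= k)%N -> vc x k = 0.
Proof. by rewrite /vc; case: insubP => [i hk _|//]; rewrite leqNgt hk. Qed.
Lemma vc_ord x (k : 'I_m) : vc x k = x 0 k.
Proof. by rewrite /vc; case: insubP => [i _ /val_inj ->|]; rewrite ?ltn_ord. Qed.
End VC.
Section Rec.
Variable A : {poly int}.
Hypothesis Anz : A != 0.
Variable m : nat.
Local Notation d := (size A).-1.
Local Notation ad := ((lead_coef A)%:~R : rat).
Implicit Types x y : 'rV[rat]_m.

Definition rsum x j := \sum_(i < d.+1) (A`_i)%:~R * vc x (j + i)%N.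
Definition recn n x := forall j, (j + d < n)%N -> rsum x j = 0.
Definition Lam n x := (forall k, (k < n)%N -> vc x k \is a Num.int) /\ recn n x.
Definition Th n x := (forall k, (k < d)%N -> vc x k \is a Num.int) /\ recn n x.
Definition Kp n x := Lam n x /\ recn n.+1 x.

Lemma ad_neq0 : ad != 0.
Proof. by rewrite intr_eq0 lead_coef_eq0. Qed.

Lemma rsumB x y j : rsum (x - y) j = rsum x j - rsum y j.
Proof.
rewrite /rsum -sumrB; apply: eq_bigr => i _; by rewrite vcB mulrBr.
Qed.

Lemma rsum0 j : rsum 0 j = 0.
Proof. by rewrite /rsum big1 // => i _; rewrite vc0 mulr0. Qed.

Lemma subgrp_recn n : subgrp (recn n).
Proof.
split; first by move=> j _; rewrite rsum0.
by move=> u v hu hv j hj; rewrite rsumB hu ?hv ?subrr.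
Qed.

Lemma subgrp_Lam n : subgrp (Lam n).
Proof.
have [r0 rB] := subgrp_recn n.
split; first by split=> // k _; rewrite vc0.
move=> u v [iu ru] [iv rv]; split; last exact: rB.
by move=> k hk; rewrite vcB rpredB ?iu ?iv.
Qed.

Lemma subgrp_Th n : subgrp (Th n).
Proof.
have [r0 rB] := subgrp_recn n.
split; first by split=> // k _; rewrite vc0.
move=> u v [iu ru] [iv rv]; split; last exact: rB.
by move=> k hk; rewrite vcB rpredB ?iu ?iv.
Qed.

Lemma subgrp_Kp n : subgrp (Kp n).
Proof.
have [l0 lB] := subgrp_Lam n; have [r0 rB] := subgrp_recn n.+1.
split; first by split.
by move=> u v [? ?] [? ?]; split; [apply: lB|apply: rB].
Qed.

Lemma rsum_ext x y j : (forall k, (k <= j + d)%N -> vc x k = vc y k) ->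
  rsum x j = rsum y j.
Proof.
move=> h; rewrite /rsum; apply: eq_bigr => i _; rewrite h //.
by rewrite leq_add2l -ltnS; exact: ltn_ord.
Qed.

Lemma Lam_ext n x y : (forall k, (k < n)%N -> vc x k = vc y k) ->
  Lam n x -> Lam n y.
Proof.
move=> h [ix rx]; split; first by move=> k hk; rewrite -h ?ix.
move=> j hj; rewrite -(rx j hj); apply: rsum_ext => k hk; rewrite h //.
exact: leq_ltn_trans hj.
Qed.

Lemma recnS n x : (d <= n)%N ->
  recn n.+1 x <-> recn n x /\ rsum x (n - d) = 0.
Proof.
move=> hdn; split.
  move=> h; split; first by move=> j hj; apply: h; apply: ltnW.
  by apply: h; rewrite subnK.
move=> [h1 h2] j; rewrite ltnS leq_eqVlt => /orP [/eqP hj|hj]; last exact: h1.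
by have -> : j = (n - d)%N by rewrite -hj addnK.
Qed.

Lemma Lam_Th n x : (d <= n)%N -> Lam n x -> Th n x.
Proof.
move=> hdn [ix rx]; split => // k hk; apply: ix; exact: leq_trans hk hdn.
Qed.

Lemma Lam_Kp n x : (d <= n)%N -> Lam n.+1 x -> Kp n x.
Proof.
move=> hdn [ix rx]; split => //; split; last by move=> j hj; apply: rx; apply: ltnW.
by move=> k hk; apply: ix; apply: ltnW.
Qed.

Lemma Kp_Th n x : (d <= n)%N -> Kp n x -> Th n.+1 x.
Proof. by move=> hdn [lx rx]; split => //; case: (Lam_Th hdn lx). Qed.


Lemma rsumD x y j : rsum (x + y) j = rsum x j + rsum y j.
Proof.
rewrite /rsum -big_split; apply: eq_bigr => i _ /=; by rewrite vcD mulrDr.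
Qed.

Lemma rsumZ c x j : rsum (c *: x) j = c * rsum x j.
Proof.
rewrite /rsum mulr_sumr; apply: eq_bigr => i _ /=; by rewrite vcZ mulrCA.
Qed.

Definition eps n : 'rV[rat]_m := \row_(i < m) ((i == n :> nat)%:R).

Lemma vc_eps n k : (n < m)%N -> vc (eps n) k = (k == n)%:R.
Proof.
move=> hnm; rewrite /eps (@vc_row m (fun i => (i == n)%:R)); case: ifP => // /negbT; rewrite -leqNgt => hk.
case: eqP => // e; by rewrite e leqNgt hnm in hk.
Qed.

Lemma rsum_eps n j : (n < m)%N -> (j + d <= n)%N ->
  rsum (eps n) j = ((j + d)%N == n)%:R * ad.
Proof.
move=> hnm hjd; rewrite /rsum big_ord_recr /= big1 ?add0r.
  by rewrite vc_eps // mulrC.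
move=> i _; rewrite vc_eps //; case: eqP; last by rewrite mulr0.
move=> e; have : (j + i < j + d)%N by rewrite ltn_add2l.
by rewrite e ltnNge hjd.
Qed.

Lemma stepA n N : (d <= n)%N -> (n < m)%N ->
  has_index (Lam n) (Th n) N -> has_index (Kp n) (Th n.+1) N.
Proof.
move=> hdn hnm [r [rG [cov dis]]].
pose adj x := x + (- rsum x (n - d)%N / ad) *: eps n.
have vadj : forall x k, (k < n)%N -> vc (adj x) k = vc x k.
  by move=> x k hk; rewrite vcD vcZ vc_eps // ltn_eqF // mulr0 addr0.
have radj : forall x, rsum (adj x) (n - d) = 0.
  move=> x; have e := subnK hdn; rewrite rsumD rsumZ rsum_eps.
  - by rewrite e eqxx mul1r divfK ?ad_neq0 // addrN.
  - by [].
  - by rewrite e.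
have Th1 : forall x, Th n x -> Th n.+1 (adj x).
  move=> x [ix rx]; split.
    by move=> k hk; rewrite vadj ?ix //; apply: leq_trans hk hdn.
  apply/recnS => //; split; last exact: radj.
  move=> j hj; rewrite -(rx j hj); apply: rsum_ext => k hk.
  by apply: vadj; apply: leq_ltn_trans hj.
exists (fun i => adj (r i)); split; first by move=> i; apply: Th1.
split.
  move=> x [ix /(recnS _ hdn) [rx rx']].
  have [i hi] := cov x (conj ix rx); exists i; split.
    by apply: Lam_ext hi => k hk; rewrite !vcB vadj.
  apply: (subgrp_recn n.+1).2; first by apply/recnS.
  by case: (Th1 _ (rG i)).
move=> i j [hL _]; apply: dis; apply: Lam_ext hL => k hk.
by rewrite !vcB !vadj.
Qed.


Lemma tint n x : (d <= n)%N -> Kp n x -> ad * vc x n \is a Num.int.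
Proof.
move=> hdn [[ix _] rx]; have [_ h] := (recnS x hdn).1 rx.
move: h; rewrite /rsum big_ord_recr /= (subnK hdn) => /eqP; rewrite addrC addr_eq0 => /eqP h.
have h' : ad * vc x n = _ := h.
rewrite h' rpredN rpred_sum // => i _; rewrite rpredM ?intr_int //; apply: ix.
have : (n - d + i < n - d + d)%N by rewrite ltn_add2l.
by rewrite (subnK hdn).
Qed.

Lemma stepB n : `|zcontents A| = 1 -> (d <= n)%N -> (n < m)%N ->
  has_index (Lam n.+1) (Kp n) `|lead_coef A|%N.
Proof.
move=> Aprim hdn hnm.
have [z hz] := core (n - d) Aprim.
have sA : size A = d.+1 := polySpred Anz.
have hz' j : (j <= n - d)%N ->
    \sum_(i < d.+1) A`_i * z (j + i)%N = (j == (n - d)%N)%:R.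
  by move=> hj; rewrite -(hz j hj); case: (size A) sA.
pose y1 := \row_(i < m) ((z i)%:~R : rat) - ad^-1 *: eps n.
have vy : forall k, (k < m)%N -> vc y1 k = (z k)%:~R - ad^-1 * (k == n)%:R.
  by move=> k hk; rewrite vcB vcZ vc_eps // (@vc_row m (fun i => (z i)%:~R)) hk.
have ry : forall j, (j + d <= n)%N -> rsum y1 j = 0.
  move=> j hj; rewrite /y1 rsumB rsumZ rsum_eps //.
  have hj' : (j <= n - d)%N by rewrite leq_subRL // addnC.
  have -> : rsum (\row_(i < m) (z i)%:~R) j = ((j == (n - d)%N)%:R : int)%:~R.
    rewrite -(hz' j hj') /rsum.
    rewrite (big_morph (fun a : int => (a%:~R : rat)) (@intrD _) (mulr0z 1)).
    apply: eq_bigr => i _; rewrite intrM (@vc_row m (fun i => (z i)%:~R)) ifT //.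
    apply: leq_ltn_trans hnm; apply: leq_trans hj; rewrite leq_add2l.
    by rewrite -ltnS; exact: ltn_ord.
  have -> : ((j + d)%N == n) = (j == (n - d)%N).
    by apply/eqP/eqP => [<-|->]; rewrite ?addnK ?subnK.
  by case: (j == (n - d)%N); rewrite /= ?mul0r ?mulr0 ?subr0 // mul1r mulVf ?ad_neq0 // subrr.
have Ky : Kp n y1.
  split; [split|].
  - move=> k hk; rewrite vy ?(ltn_trans hk hnm) // ltn_eqF // mulr0 subr0.
    exact: intr_int.
  - by move=> j hj; apply: ry; apply: ltnW.
  - by move=> j hj; apply: ry.
have vyn : vc y1 n = (z n)%:~R - ad^-1 by rewrite vy // eqxx mulr1.
pose a := lead_coef A.
have a0 : a != 0 by rewrite lead_coef_eq0.
exists (fun j : 'I_`|a|%N => - (y1 *+ j)).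
split.
  by move=> j; apply: subgrpN (subgrp_Kp n) _; apply: subgrpMn (subgrp_Kp n) _.
split.
  move=> x hx; have [T hT] := intrP (tint hdn hx).
  set r := (T %% a)%Z.
  have r0 : 0 <= r := modz_ge0 _ a0.
  have ra : r < `|a| := ltz_mod _ a0.
  have hj : (`|r|%N < `|a|%N)%N by rewrite -ltz_nat gez0_abs // abszE.
  exists (Ordinal hj); rewrite opprK /=.
  have KX : Kp n (x + y1 *+ `|r|%N).
    by apply: (subgrpD (subgrp_Kp n) hx); apply: subgrpMn (subgrp_Kp n) _.
  case: KX => [[iX rX] rX']; split => //.
  move=> k; rewrite ltnS leq_eqVlt => /orP [/eqP ->|hk]; last exact: iX.
  have hxn : vc x n = T%:~R / ad by rewrite -hT mulrC mulKf ?ad_neq0.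
  have eT : (T%:~R : rat) = (T %/ a)%Z%:~R * ad + (`|r|%N)%:R.
    rewrite {1}(divz_eq T a) intrD intrM -/r.
    by rewrite -[in LHS](gez0_abs r0).
  rewrite vcD vcMn vyn hxn eT mulrDl mulfK ?ad_neq0 // mulrnBl mulr_natl.
  by rewrite addrACA subrr addr0 rpredD ?rpredMn ?intr_int.
move=> i j [iX _]; have := iX n (ltnSn n).
rewrite vcB !vcN !vcMn opprK => H.
have e : - (vc y1 n *+ i) + vc y1 n *+ j = vc y1 n * (j%:R - i%:R).
  by rewrite mulrBr !mulr_natr addrC.
rewrite e vyn mulrBl in H.
have : (ad^-1 * (j%:R - i%:R)) \is a Num.int.
  have Hz : ((z n)%:~R * (j%:R - i%:R) : rat) \is a Num.int.
    by rewrite rpredM ?intr_int // rpredB // rpred_nat.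
  by have := rpredB Hz H; rewrite subKr.
case/intrP => q hq.
have : (j%:Z - i%:Z) = q * a.
  apply: (@intr_inj rat); rewrite intrM intrB -hq mulrC mulrA.
  by rewrite mulfV ?ad_neq0 // mul1r.
move=> hji; apply/val_inj/eqP; rewrite /= eq_sym -distn_eq0.
apply/negPn/negP => hne.
have : (`|a|%N %| `|j%:Z - i%:Z|%N)%N by rewrite -dvdzE hji dvdz_mull.
move=> hd; have hpos : (0 < `|(j%:Z - i%:Z)|%N)%N by rewrite lt0n.
move: (dvdn_leq hpos hd).
case: (leqP i j) => hij.
  rewrite (distnEl hij) => h; have := leq_trans h (leq_subr i j).
  move=> hh; have := ltn_ord j; rewrite -/a => hj'.
  by have := leq_ltn_trans hh hj'; rewrite ltnn.
rewrite (distnEr (ltnW hij)) => h; have := leq_trans h (leq_subr j i).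
move=> hh; have := ltn_ord i; rewrite -/a => hi'.
by have := leq_ltn_trans hh hi'; rewrite ltnn.
Qed.



Lemma base : has_index (Lam d) (Th d) 1.
Proof.
exists (fun _ => 0); split; first by move=> _; exact: (subgrp_Th d).1.
split; first by move=> x [ix rx]; exists ord0; rewrite subr0; split.
by move=> i j _; rewrite !ord1.
Qed.

Lemma ind k : `|zcontents A| = 1 -> (d + k <= m)%N ->
  has_index (Lam (d + k)) (Th (d + k)) (`|lead_coef A| ^ k)%N.
Proof.
move=> Aprim; elim: k => [|k IH] hk.
  by rewrite addn0 expn0; exact: base.
have hn : (d + k < m)%N by rewrite addnS in hk.
rewrite addnS expnSr.
have hdn : (d <= d + k)%N := leq_addr k d.
apply: (@has_index_comp _ _ (Kp (d + k))).
- exact: subgrp_Lam.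
- exact: subgrp_Kp.
- exact: subgrp_Th.
- by move=> x; apply: Lam_Kp.
- by move=> x; apply: Kp_Th.
- by apply: stepA => //; apply: IH; apply: ltnW.
- exact: stepB.
Qed.

End Rec.

Unset Implicit Arguments.

Theorem corollary1 (A : {poly int}) (m : nat) :
  primitive_poly A ->
  (1 <= (size A).-1)%N ->
  A`_0 != 0 ->
  ((size A).-1 < m)%N ->
  (forall x : 'rV[rat]_m, Lambda A x -> Theta A x) /\
  has_index (Lambda A (m:=m)) (Theta A (m:=m))
            (`|lead_coef A| ^ (m - (size A).-1))%N.
Proof.
move=> Aprim hd _ hdm.
have Anz : A != 0.
  by apply/eqP => A0; move: hd; rewrite A0 size_poly0.
split.
  move=> x [ix rx]; split => // k _; exact: ix.
have := @ind A Anz m (m - (size A).-1)%N Aprim.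
rewrite subnKC ?(ltnW hdm) // => /(_ (leqnn m)).
apply: has_index_ext => x.
  split.
    by move=> [ix rx]; split; [move=> k; rewrite -vc_ord; apply: ix | exact: rx].
  by move=> [ix rx]; split; [move=> k hk; have := ix (Ordinal hk); rewrite -vc_ord | exact: rx].
split.
  move=> [ix rx]; split; [move=> k hk; rewrite -vc_ord; apply: ix | exact: rx].
  done.
move=> [ix rx]; split; [|exact: rx].
move=> k hk; have hkm : (k < m)%N by apply: ltn_trans hdm.
by have := ix (Ordinal hkm) hk; rewrite -vc_ord.
Qed.
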